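(* Let $N\ge 1$ be an integer, let $\alpha$ be a real number with $1/N\le\alpha\le 1$, and let $P>0$. Define $$\mathcal{D}_1=\{\mathbf{x}\in\mathbb{C}^N : \|\mathbf{x}\|_2^2\le P\},\qquad \mathcal{D}_2=\{\mathbf{x}\in\mathbb{C}^N : |x_i|^2\le \alpha\|\mathbf{x}\|_2^2 \text{ for all } i=1,\dots,N\},$$ and $\mathcal{D}=\mathcal{D}_1\cap\mathcal{D}_2$. Let $\mathbf{z}\in\mathbb{C}^N$ and let $\mathbf{x}'$ be an orthogonal projection of $\mathbf{z}$ onto $\mathcal{D}_2$, i.e., $\mathbf{x}'\in\mathcal{D}_2$ and $\|\mathbf{z}-\mathbf{x}'\|_2\le\|\mathbf{z}-\mathbf{w}\|_2$ for all $\mathbf{w}\in\mathcal{D}_2$. Set $\mathbf{x}=\mathbf{x}'$ if $\mathbf{x}'=\mathbf{0}$, and otherwise $\mathbf{x}=\min\{1,\sqrt{P}/\|\mathbf{x}'\|_2\}\,\mathbf{x}'$ (the orthogonal projection of $\mathbf{x}'$ onto $\mathcal{D}_1$). Then $\mathbf{x}$ is an orthogonal projection of $\mathbf{z}$ onto $\mathcal{D}$, i.e., $\mathbf{x}\in\mathcal{D}$ and $\|\mathbf{z}-\mathbf{x}\|_2\le\|\mathbf{z}-\mathbf{w}\|_2$ for all $\mathbf{w}\in\mathcal{D}$.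
   Context: $\|\cdot\|_2$ is the Euclidean norm on $\mathbb{C}^N$. The set $\mathcal{D}_2$ is the set of vectors whose peak-to-average power ratio $N\|\mathbf{x}\|_\infty^2/\|\mathbf{x}\|_2^2$ is at most $\rho=\alpha N$ (together with $\mathbf{0}$), and $\mathcal{D}_1$ is a power (norm) constraint. *)

(* Defs.v *)
(* reals = an arbitrary real closed field R (e.g. the real
   numbers), complex numbers = R[i] from mathcomp-real-closed. *)
From HB Require Import structures.
From mathcomp Require Import all_boot all_order all_algebra.
From mathcomp Require Import complex.
Set Implicit Arguments. Unset Strict Implicit. Unset Printing Implicit Defensive.
Import Order.TTheory GRing.Theory Num.Theory.
Local Open Scope ring_scope.
Local Open Scope complex_scope.

Definition cabs2 (R : rcfType) (c : R[i]) : R :=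
  let: a +i* b := c in a ^+ 2 + b ^+ 2.

Definition cvec (R : rcfType) (N : nat) := {ffun 'I_N -> R[i]}.

Definition sqnorm2 (R : rcfType) (N : nat) (x : cvec R N) : R :=
  \sum_(i < N) cabs2 (x i).
Definition norm2 (R : rcfType) (N : nat) (x : cvec R N) : R :=
  Num.sqrt (sqnorm2 x).

Definition vsub (R : rcfType) (N : nat) (x y : cvec R N) : cvec R N :=
  [ffun i => x i - y i].
Definition vscale (R : rcfType) (N : nat) (a : R) (x : cvec R N) : cvec R N :=
  [ffun i => a%:C * x i].
Definition vzero (R : rcfType) (N : nat) : cvec R N := [ffun=> 0].

Definition D1 (R : rcfType) (N : nat) (P : R) (x : cvec R N) : Prop :=
  sqnorm2 x <= P.
Definition D2 (R : rcfType) (N : nat) (alpha : R) (x : cvec R N) : Prop :=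
  forall i : 'I_N, cabs2 (x i) <= alpha * sqnorm2 x.
Definition Dset (R : rcfType) (N : nat) (P alpha : R) (x : cvec R N) : Prop :=
  D1 P x /\ D2 alpha x.

Definition is_proj (R : rcfType) (N : nat) (S : cvec R N -> Prop)
  (z x : cvec R N) : Prop :=
  S x /\ forall w, S w -> norm2 (vsub z x) <= norm2 (vsub z w).

(* Main.v *)
Require Import Defs.
From HB Require Import structures.
From mathcomp Require Import all_boot all_order all_algebra.
From mathcomp Require Import complex.
From mathcomp Require Import ring lra.
Import Order.TTheory GRing.Theory Num.Theory.
Local Open Scope ring_scope.

Section Aux.
Local Open Scope complex_scope.
Variable R : rcfType.

Definition ipc (u v : R[i]) : R :=
  let: a +i* b := u in let: a' +i* b' := v in a * a' + b * b'.

Lemma cabs2_subscale (c : R) (u v : R[i]) :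
  cabs2 (u - c%:C * v) = cabs2 u - 2 * c * ipc u v + c ^+ 2 * cabs2 v.
Proof. case: u => a b; case: v => a' b'; rewrite /cabs2 /ipc /=; ring. Qed.

Lemma cabs2_scale (c : R) (v : R[i]) : cabs2 (c%:C * v) = c ^+ 2 * cabs2 v.
Proof. case: v => a' b'; rewrite /cabs2 /=; ring. Qed.

Lemma cabs2_ge0 (u : R[i]) : 0 <= cabs2 u.
Proof. case: u => a b; rewrite /cabs2; nra. Qed.

Lemma cabs2_eq0 (u : R[i]) : cabs2 u = 0 -> u = 0.
Proof.
case: u => a b; rewrite /cabs2 => h.
have ha : a ^+ 2 = 0 by have := sqr_ge0 a; have := sqr_ge0 b; lra.
have hb : b ^+ 2 = 0 by have := sqr_ge0 a; have := sqr_ge0 b; lra.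
move/eqP: ha; rewrite sqrf_eq0 => /eqP ->.
by move/eqP: hb; rewrite sqrf_eq0 => /eqP ->.
Qed.

Definition ip {N : nat} (z w : cvec R N) : R := \sum_(i < N) ipc (z i) (w i).

Lemma sqnorm2_ge0 N (x : cvec R N) : 0 <= sqnorm2 x.
Proof. by apply: sumr_ge0 => i _; apply: cabs2_ge0. Qed.

Lemma sqnorm_subscale N (z w : cvec R N) c :
  sqnorm2 (vsub z (vscale c w)) = sqnorm2 z - 2 * c * ip z w + c ^+ 2 * sqnorm2 w.
Proof.
rewrite /sqnorm2 /ip !mulr_sumr -sumrN -!big_split /=.
by apply: eq_bigr => i _; rewrite !ffunE cabs2_subscale.
Qed.

Lemma sqnorm_sub N (z w : cvec R N) :
  sqnorm2 (vsub z w) = sqnorm2 z - 2 * ip z w + sqnorm2 w.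
Proof.
have -> : vsub z w = vsub z (vscale 1 w).
  by apply/ffunP => i; rewrite !ffunE mul1r.
by rewrite sqnorm_subscale mulr1 expr1n mul1r.
Qed.

Lemma sqnorm_scale N (w : cvec R N) c : sqnorm2 (vscale c w) = c ^+ 2 * sqnorm2 w.
Proof.
rewrite /sqnorm2 mulr_sumr; apply: eq_bigr => i _; by rewrite ffunE cabs2_scale.
Qed.

Lemma D2_scale N alpha (w : cvec R N) c : D2 alpha w -> D2 alpha (vscale c w).
Proof.
move=> h i; rewrite sqnorm_scale ffunE cabs2_scale.
have := h i; have := sqr_ge0 c; nra.
Qed.

Lemma sqnorm_pos N (x : cvec R N) : x != vzero R N -> 0 < sqnorm2 x.
Proof.
move=> hx; rewrite lt_neqAle sqnorm2_ge0 andbT eq_sym; apply/eqP => h.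
move/eqP: hx; apply; apply/ffunP => i; rewrite ffunE.
apply: cabs2_eq0; exact: (psumr_eq0P (fun i _ => cabs2_ge0 (x i)) h).
Qed.

End Aux.
Arguments ip {R N}.

Theorem mainTheorem1 (R : rcfType) (N : nat) (alpha P : R)
  (z x' : cvec R N) :
  (1 <= N)%N ->
  N%:R^-1 <= alpha -> alpha <= 1 -> 0 < P ->
  is_proj (D2 alpha) z x' ->
  is_proj (Dset P alpha) z
    (if x' == vzero R N then x'
     else vscale (Num.min 1 (Num.sqrt P / norm2 x')) x').
Proof.
move=> hN ha1 ha2 hP [hx'D2 hopt].
have opt : forall w, D2 alpha w -> sqnorm2 (vsub z x') <= sqnorm2 (vsub z w).
  by move=> w hw; have := hopt w hw; rewrite /norm2 ler_sqrt // sqnorm2_ge0.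
have [E|hx0] := eqVneq x' (vzero R N).
  rewrite E; split.
    have c0 : forall j, cabs2 (vzero R N j) = 0.
      by move=> j; rewrite ffunE /cabs2 /= expr0n /= addr0.
    have s0 : sqnorm2 (vzero R N) = 0 by rewrite /sqnorm2 big1.
    split; first by rewrite /D1 s0 ltW.
    by move=> i; rewrite c0 s0 mulr0.
  by move=> w [_ hw]; rewrite -E; apply: hopt.
have hq := @sqnorm_pos _ _ _ hx0.
set q := sqnorm2 x' in hq *.
set Z := sqnorm2 z.
set p := ip z x'.
have hc : forall c, 0 <= c -> Z - 2 * p + q <= Z - 2 * c * p + c ^+ 2 * q.
  move=> c _; rewrite -sqnorm_sub -sqnorm_subscale; apply: opt; exact: D2_scale.
have hpq : p = q.
  have h0 := hc 0 (lexx _).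
  have hp : 0 < p by move: h0; rewrite mulr0 mul0r expr0n /= mul0r; lra.
  have := hc (p / q) (divr_ge0 (ltW hp) (ltW hq)).
  have hcq : p / q * q = p by rewrite divfK // gt_eqF.
  move: (p / q) hcq => c hcq h1.
  have h2 : (c - 1) ^+ 2 * q <= 0 by nra.
  have h3 : (c - 1) ^+ 2 <= 0 by nra.
  have h5 := sqr_ge0 (c - 1).
  have : (c - 1) ^+ 2 == 0 by rewrite eq_le h3 h5.
  rewrite sqrf_eq0 subr_eq0 => /eqP h4.
  by rewrite -hcq h4 mul1r.
have ha0 : 0 < norm2 x' by rewrite /norm2 sqrtr_gt0.
have hasq : norm2 x' ^+ 2 = q by rewrite /norm2 sqr_sqrtr // ltW.
set a := norm2 x' in ha0 hasq *.
have hs0 : 0 <= Num.sqrt P by apply: sqrtr_ge0.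
have hs2 : Num.sqrt P ^+ 2 = P by rewrite sqr_sqrtr // ltW.
set s := Num.sqrt P in hs0 hs2 *.
have hsa : s / a * a = s by rewrite divfK // gt_eqF.
have ht : (Num.min 1 (s / a) = 1 /\ a <= s) \/
          (Num.min 1 (s / a) * a = s /\ s < a).
  have [h|h] := leP 1 (s / a).
    left; split=> //.
    move: (s / a) hsa h => u hu h; nra.
  right; split=> //.
  move: (s / a) hsa h => u hu h; nra.
move: (Num.min 1 (s / a)) ht => t ht.
split.
  split; last exact: D2_scale.
  rewrite /D1 sqnorm_scale -/q -hs2 -hasq.
  case: ht => [[-> h]|[h _]]; last by rewrite -h exprMn.
  rewrite expr1n mul1r; nra.
move=> w [hw1 hw2].
rewrite /norm2 ler_sqrt ?sqnorm2_ge0 // sqnorm_subscale sqnorm_sub -/Z -/p -/q.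
have hb : forall c, 0 <= c -> 2 * c * ip z w <= q + c ^+ 2 * sqnorm2 w.
  move=> c hc0; have := opt _ (@D2_scale _ _ _ _ c hw2).
  rewrite sqnorm_subscale sqnorm_sub -/Z -/p -/q hpq; lra.
have hR0 := @sqnorm2_ge0 _ _ w.
have hr2 : Num.sqrt (sqnorm2 w) ^+ 2 = sqnorm2 w by rewrite sqr_sqrtr.
have hr0 : 0 <= Num.sqrt (sqnorm2 w) by apply: sqrtr_ge0.
have hrs : Num.sqrt (sqnorm2 w) <= s by rewrite /s ler_sqrt // ltW.
move: (Num.sqrt (sqnorm2 w)) hr2 hr0 hrs => r hr2 hr0 hrs.
have hbar : ip z w <= a * r.
  have [hb0|hb0] := leP (ip z w) 0; first nra.
  have hcb : q / ip z w * ip z w = q by rewrite divfK // gt_eqF.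
  have := hb _ (divr_ge0 (ltW hq) (ltW hb0)).
  move: (q / ip z w) hcb => c hcb h.
  have h1 : q <= c ^+ 2 * sqnorm2 w by nra.
  have h2 : ip z w ^+ 2 * q <= q ^+ 2 * sqnorm2 w.
    rewrite -hcb; nra.
  have h3 : ip z w ^+ 2 <= q * sqnorm2 w by nra.
  rewrite -hasq -hr2 in h3; have har : 0 <= a * r by rewrite mulr_ge0 // ltW.
  nra.
rewrite hpq -hr2 -hasq.
case: ht => [[-> h]|[h h']].
  have := sqr_ge0 (r - a); nra.
have e1 : t ^+ 2 * a ^+ 2 = s ^+ 2 by rewrite -h exprMn.
have e2 : 2 * t * a ^+ 2 = 2 * s * a by rewrite -h; ring.
have h1 : 0 <= (s - r) * (2 * a - r - s) by apply: mulr_ge0; lra.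
rewrite e1 e2; nra.
Qed.
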